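(* For all positive integers $n\geq 2$ and $t$, the Roman domination number of $S(K_n,t)$ is $$\gamma_R(S(K_n,t))=\begin{cases}2\left\lceil\frac{n^t}{n+1}\right\rceil & \text{if } t \text{ is odd},\\[2pt] 2\left\lceil\frac{n^t}{n+1}\right\rceil-1 & \text{if } t \text{ is even}.\end{cases}$$
   Context: For a positive integer $n$ let $[n]=\{1,\dots,n\}$. For positive integers $n,t$, the Sierpiński graph $S(K_n,t)$ is the simple graph with vertex set $[n]^t$ (words $v_1v_2\cdots v_t$ with $v_i\in[n]$), in which $u_1\cdots u_t$ and $v_1\cdots v_t$ are adjacent if and only if there is $s\in[t]$ with $u_j=v_j$ for all $j<s$, $u_s\neq v_s$, and $u_j=v_s$ and $v_j=u_s$ for all $j>s$. A Roman dominating function on a graph $G=(V,E)$ is a function $f:V\to\{0,1,2\}$ such that every vertex $u$ with $f(u)=0$ has a neighbor $v$ with $f(v)=2$. Its weight is $\sum_{v\in V}f(v)$, and the Roman domination number $\gamma_R(G)$ is the minimum weight of a Roman dominating function on $G$. *)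

(* Defs.v *)
From mathcomp Require Import all_boot.
Set Implicit Arguments. Unset Strict Implicit. Unset Printing Implicit Defensive.

(* Vertices of S(K_n,t): words of length t over the alphabet 'I_n
   (letters 0..n-1 stand for 1..n). *)
Definition sier_vertex (n t : nat) := (t.-tuple 'I_n)%type.

Definition sier_adj (n t : nat) (u v : sier_vertex n t) : bool :=
  [exists s : 'I_t,
     [&& [forall j : 'I_t, (j < s) ==> (tnth u j == tnth v j)],
         tnth u s != tnth v s &
         [forall j : 'I_t, (s < j) ==>
            ((tnth u j == tnth v s) && (tnth v j == tnth u s))]]].

Definition roman_dom {V : finType} (adj : rel V) (f : V -> nat) : Prop :=
  (forall v, f v <= 2) /\
  (forall u, f u = 0 -> exists v, adj u v && (f v == 2)).

Definition rd_weight {V : finType} (f : V -> nat) : nat := \sum_(v : V) f v.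

Definition is_roman_domination_number {V : finType} (adj : rel V) (w : nat) : Prop :=
  (exists f : V -> nat, roman_dom adj f /\ rd_weight f = w) /\
  (forall f : V -> nat, roman_dom adj f -> w <= rd_weight f).

Definition ceil_div (a b : nat) : nat := (a + b - 1) %/ b.

(* Main.v *)
Require Import Defs.
From mathcomp Require Import all_boot zify.
Set Implicit Arguments. Unset Strict Implicit. Unset Printing Implicit Defensive.

Section S.
Variable n : nat.

Lemma tnthS' t a (u : t.-tuple 'I_n) (j : 'I_t.+1.-1) :
  tnth [tuple of a :: u] (lift ord0 j) = tnth u j.
Proof. exact: tnthS. Qed.

Lemma adj_cons_same t a (u v : t.-tuple 'I_n) :
  sier_adj u v -> sier_adj [tuple of a :: u] [tuple of a :: v].
Proof.
move/existsP=> [s /and3P[H1 H2 H3]]; apply/existsP; exists (lift ord0 s).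
apply/and3P; split.
- apply/forallP => j; case: (unliftP ord0 j) => [j'|] ->; last by rewrite !tnth0 eqxx implybT.
  rewrite !tnthS' !lift0 ltnS; exact: (forallP H1 j').
- by rewrite !tnthS'.
- apply/forallP => j; case: (unliftP ord0 j) => [j'|] -> //.
  rewrite !tnthS' !lift0 ltnS; exact: (forallP H3 j').
Qed.

Lemma adj_cons_diff t (a b : 'I_n) : a != b ->
  sier_adj [tuple of a :: nseq_tuple t b] [tuple of b :: nseq_tuple t a].
Proof.
move=> ab; apply/existsP; exists ord0; apply/and3P; split.
- by apply/forallP => j; rewrite ltn0.
- by [].
apply/forallP => j; case: (unliftP ord0 j) => [j'|] ->; last by [].
by rewrite !tnthS' !tnth_nseq !eqxx.
Qed.

Lemma sum_cons t (F : (t.+1).-tuple 'I_n -> nat) :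
  \sum_(u : (t.+1).-tuple 'I_n) F u =
  \sum_(a : 'I_n) \sum_(w : t.-tuple 'I_n) F [tuple of a :: w].
Proof.
rewrite pair_big /=.
rewrite (reindex (fun p : 'I_n * t.-tuple 'I_n => [tuple of p.1 :: p.2])) //=.
exists (fun u => (thead u, behead_tuple u)).
  by move=> [a w] _; congr pair; apply: val_inj.
by move=> u _; case/tupleP: u => a w; apply: val_inj.
Qed.

Fixpoint code (X : bool) (o : option 'I_n) (w : seq 'I_n) : bool :=
  match w with
  | [::] => X
  | a :: w' =>
    match o with
    | Some i => if a == i then code X None w' else code (~~ X) (Some i) w'
    | None => code X (Some a) w'
    end
  end.

Definition domd t X o (u : t.-tuple 'I_n) :=
  exists v : t.-tuple 'I_n, ((u == v) || sier_adj u v) && code X o v.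

Lemma lift_dom t X o X' o' a (w : t.-tuple 'I_n) :
  (forall v : t.-tuple 'I_n, code X o (a :: v) = code X' o' v) ->
  domd X' o' w -> domd X o [tuple of a :: w].
Proof.
move=> E [v /andP[H1 H2]]; exists [tuple of a :: v].
have -> : code X o [tuple of a :: v] = code X' o' v by exact: E.
rewrite H2 andbT.
case/orP: H1 => [/eqP -> | H]; first by rewrite eqxx.
by rewrite adj_cons_same ?orbT.
Qed.

Lemma code_here t X o (u : t.-tuple 'I_n) : code X o u -> domd X o u.
Proof. by move=> H; exists u; rewrite eqxx H. Qed.

Lemma main t :
  (~~ odd t ->
    (forall j, code true None (nseq t j)) /\
    (forall u : t.-tuple 'I_n, domd true None u) /\
    (forall i j, code false (Some i) (nseq t j) = false) /\
    (forall i (u : t.-tuple 'I_n), tval u != nseq t i -> domd false (Some i) u))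
 /\
  (odd t ->
    (forall i j, code true (Some i) (nseq t j) = (j == i)) /\
    (forall i (u : t.-tuple 'I_n), domd true (Some i) u) /\
    (forall j, code false None (nseq t j) = false) /\
    (forall u : t.-tuple 'I_n, (forall j, tval u != nseq t j) -> domd false None u)).
Proof.
elim: t => [|t [IHe IHo]].
  split => // _; split; first by [].
  split; first by move=> u; apply: code_here; rewrite tuple0.
  split; first by [].
  by move=> i u; rewrite tuple0.
rewrite /=; case Ot: (odd t) => /=.
-
  have [A1 [A2 [C1 C2]]] := IHo Ot.
  split => // _; split; [|split; [|split]].
  + by move=> j /=; rewrite A1.
  + move=> u; case/tupleP: u => a w; apply: (lift_dom (X' := true) (o' := Some a)) => //.
  + move=> i j /=; case: eqP => [->|/eqP ji]; first exact: C1.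
    by rewrite A1 (negbTE ji).
  + move=> i u; case/tupleP: u => a w /= Hu; case: (eqVneq a i) => [ai|ai].
    * subst a.
      case: (boolP [exists j : 'I_n, tval w == nseq t j]) => [/existsP [j /eqP wj]|nw].
        have ji : i != j by apply/eqP => ij; move: Hu; rewrite wj ij /= eqxx.
        have -> : w = nseq_tuple t j by apply: val_inj.
        exists [tuple of j :: nseq_tuple t i]; rewrite adj_cons_diff // orbT /=.
        by rewrite eq_sym (negbTE ji) A1 eqxx.
      apply: (lift_dom (X' := false) (o' := None)); first by move=> v /=; rewrite eqxx.
      apply: C2 => j; apply/negP => /eqP wj; case/existsP: nw; exists j; exact/eqP.
    * apply: (lift_dom (X' := true) (o' := Some i)); first by move=> v /=; rewrite (negbTE ai).
      exact: A2.
-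
  have [E1 [E2 [B1 B2]]] := IHe (negbT Ot).
  split => // _; split; [|split; [|split]].
  + move=> i j /=; case: (eqVneq j i) => [->|ji]; first by rewrite E1.
    exact: B1.
  + move=> i u; case/tupleP: u => a w; case: (eqVneq a i) => [ai|ai].
    * subst a; apply: (lift_dom (X' := true) (o' := None)); first by move=> v /=; rewrite eqxx.
      exact: E2.
    * case: (eqVneq (tval w) (nseq t i)) => [wi|wi].
        have -> : w = nseq_tuple t i by apply: val_inj.
        exists [tuple of i :: nseq_tuple t a]; rewrite adj_cons_diff // orbT /=.
        by rewrite eqxx E1.
      apply: (lift_dom (X' := false) (o' := Some i)); first by move=> v /=; rewrite (negbTE ai).
      exact: B2.
  + by move=> j /=; rewrite B1.
  + move=> u; case/tupleP: u => a w /= Hu.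
    apply: (lift_dom (X' := false) (o' := Some a)); first by [].
    apply: B2; apply/negP => /eqP wa; move: (Hu a); rewrite /= wa eqxx.
    done.
Qed.

Fixpoint cc t : (bool -> nat) * (bool -> nat) :=
  match t with
  | 0 => (fun X => nat_of_bool X, fun X => nat_of_bool X)
  | t'.+1 => let: (s, c) := cc t' in
             (fun X => c X + (n - 1) * s (~~ X), fun X => n * s X)
  end.

Lemma count_code t X o :
  \sum_(u : t.-tuple 'I_n) (code X o u : nat) =
  match o with Some _ => (cc t).1 X | None => (cc t).2 X end.
Proof.
elim: t X o => [|t IH] X o.
  rewrite (eq_bigr (fun _ => nat_of_bool X)); last by move=> u _; rewrite tuple0; case: o.
  by rewrite sum_nat_const card_tuple expn0 mul1n; case: o.
rewrite sum_cons /=; case: (cc t) IH => s c IH.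
case: o => [i|] /=.
- rewrite (eq_bigr (fun a => if a == i then c X else s (~~ X))); last first.
    move=> a _; case: eqP => _; first exact: (IH X None).
    exact: (IH (~~ X) (Some i)).
  rewrite (bigD1 i) //= eqxx; congr (_ + _).
  rewrite (eq_bigr (fun _ => s (~~ X))); last by move=> a /negbTE ->.
  by rewrite sum_nat_const cardC1 card_ord subn1.
- rewrite (eq_bigr (fun _ => s X)); last by move=> a _; exact: (IH X (Some a)).
  by rewrite sum_nat_const card_ord.
Qed.

Lemma cc_closed t : 1 <= n ->
  (odd t -> (n + 1) * (cc t).1 true = n ^ t + 1 /\ (n + 1) * (cc t).2 false + n = n ^ t) /\
  (~~ odd t -> (n + 1) * (cc t).1 false + 1 = n ^ t /\ (n + 1) * (cc t).2 true = n ^ t + n).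
Proof.
move=> n1; elim: t => [|t IH]; first by rewrite /= muln0 muln1 addnC.
rewrite /= expnS; case: (cc t) IH => s c /= [IHo IHe].
case Ot: (odd t) => /=.
- have [h1 h2] := IHo Ot; split => // _; split.
    nia.
  nia.
- have [h1 h2] := IHe (negbT Ot); split => // _; split.
    nia.
  nia.
Qed.

Lemma adjE t x0 (u v : t.-tuple 'I_n) : sier_adj u v ->
  exists s, [/\ s < t, (forall j, j < s -> nth x0 u j = nth x0 v j),
     nth x0 u s != nth x0 v s &
     (forall j, s < j -> j < t -> nth x0 u j = nth x0 v s /\ nth x0 v j = nth x0 u s)].
Proof.
case/existsP => s /and3P[H1 H2 H3]; exists s; split.
- exact: ltn_ord.
- move=> j js; have jt : j < t by apply: ltn_trans (ltn_ord s).
  have := forallP H1 (Ordinal jt); rewrite /= js !(tnth_nth x0) /=.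
  by move/eqP.
- by rewrite -!(tnth_nth x0).
- move=> j sj jt; have := forallP H3 (Ordinal jt); rewrite /= sj !(tnth_nth x0) /=.
  by case/andP => /eqP -> /eqP ->.
Qed.

Lemma deg_le t (v : (t.+1).-tuple 'I_n) : #|[set u | sier_adj u v]| <= n.
Proof.
have x0 : 'I_n.
  case: n v => [|m] v; last exact: ord0.
  by case: (tnth v ord0).
pose pa (u : (t.+1).-tuple 'I_n) := [forall j : 'I_(t.+1), (j < t) ==> (tnth u j == tnth v j)].
pose g u := if pa u then tnth u ord_max else tnth v ord_max.
have paE : forall u, pa u = [forall j : 'I_(t.+1), (j < t) ==> (nth x0 u j == nth x0 v j)].
  by move=> u; apply: eq_forallb => j; rewrite !(tnth_nth x0).
have gE : forall u, g u = if pa u then nth x0 u t else nth x0 v t.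
  by move=> u; rewrite /g !(tnth_nth x0).
have cls : forall u, sier_adj u v ->
   (pa u /\ nth x0 u t != nth x0 v t) \/
   (exists2 s, s < t & [/\ ~~ pa u,
      (forall j, s < j -> j < t.+1 -> nth x0 v j = nth x0 u s),
      nth x0 u s != nth x0 v s &
      forall j, j < t.+1 -> nth x0 u j =
        (if j < s then nth x0 v j else if j == s then nth x0 v s.+1 else nth x0 v s)]).
  move=> u /(adjE x0) [s [st H1 H2 H3]].
  move: (st); rewrite ltnS leq_eqVlt => /orP [/eqP seq|slt].
    subst s; left; split => //; rewrite paE; apply/forallP => j; apply/implyP => jt.
    by rewrite H1.
  right; exists s => //; split => //.
  - rewrite paE; apply/negP => /forallP /(_ (Ordinal (leqW slt))) /=.
    by rewrite slt /= (negbTE H2).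
  - by move=> j sj jt; case: (H3 j sj jt).
  - move=> j jt; case: (ltngtP j s) => [js|sj|->].
    + exact: H1.
    + by case: (H3 j sj jt).
    + by case: (H3 s.+1 (ltnSn s) slt) => _ ->.
have inj : {in [set u | sier_adj u v] &, injective g}.
  move=> u1 u2; rewrite !inE => a1 a2; rewrite !gE.
  case: (cls u1 a1) => [[p1 d1]|[s1 s1t [p1 v1 d1 f1]]];
  case: (cls u2 a2) => [[p2 d2]|[s2 s2t [p2 v2 d2 f2]]];
  rewrite ?p1 ?p2 ?(negbTE p1) ?(negbTE p2).
  - move=> e; apply: eq_from_tnth => j; rewrite !(tnth_nth x0).
    have := ltn_ord j; rewrite ltnS leq_eqVlt => /orP [/eqP -> //|jt].
    move: p1 p2; rewrite !paE => /forallP /(_ j) /implyP /(_ jt) /eqP ->.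
    by move=> /forallP /(_ j) /implyP /(_ jt) /eqP ->.
  - by move=> e; rewrite e eqxx in d1.
  - by move=> e; rewrite -e eqxx in d2.
  - move=> _.
    have ss : s1 = s2.
      have key : forall u1 u2 s1 s2, s1 < s2 -> s2 < t ->
          (forall j, s1 < j -> j < t.+1 -> nth x0 v j = nth x0 u1 s1) ->
          (forall j, s2 < j -> j < t.+1 -> nth x0 v j = nth x0 u2 s2) ->
          nth x0 u2 s2 != nth x0 v s2 -> False.
        move=> w1 w2 r1 r2 r12 r2t e1 e2 d.
        move: d; rewrite -(e2 r2.+1) // (e1 r2) 1?(e1 r2.+1) ?eqxx //.
        - exact: ltn_trans r12 _.
        - exact: ltnW.
      case: (ltngtP s1 s2) => [lt|lt|//].
        by case: (key u1 u2 s1 s2 lt s2t v1 v2 d2).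
      by case: (key u2 u1 s2 s1 lt s1t v2 v1 d1).
    subst s2; apply: eq_from_tnth => j; rewrite !(tnth_nth x0).
    by rewrite f1 // f2.
rewrite -(card_in_imset inj); apply: leq_trans (max_card _) _.
by rewrite card_ord.
Qed.

Lemma sum_ind (T : finType) (P : pred T) : \sum_(u : T) (P u : nat) = #|P|.
Proof.
rewrite -sum1_card [RHS]big_mkcond /=; apply: eq_bigr => u _.
by rewrite unfold_in; case: (P u).
Qed.

Lemma lower t (f : (t.+1).-tuple 'I_n -> nat) : roman_dom (@sier_adj n t.+1) f ->
  exists a b z, [/\ z + b + a = n ^ t.+1, z <= n * a & rd_weight f = b + 2 * a].
Proof.
move=> [f2 fd].
exists (\sum_u (f u == 2 : nat)), (\sum_u (f u == 1 : nat)), (\sum_u (f u == 0 : nat)).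
split.
- have -> : n ^ t.+1 = \sum_(u : (t.+1).-tuple 'I_n) 1.
    by rewrite sum_nat_const card_tuple card_ord muln1.
  rewrite -!big_split /=; apply: eq_bigr => u _.
  by move: (f2 u); case: (f u) => [|[|[|]]].
- apply: (@leq_trans (\sum_u \sum_v ((f v == 2) && sier_adj u v : nat))).
    apply: leq_sum => u _; case: eqP => [/fd [v /andP [uv fv]]|] //.
    rewrite (bigD1 v) //= uv fv; exact: leq_addr.
  rewrite exchange_big /= big_distrr /=; apply: leq_sum => v _.
  rewrite (eq_bigr (fun u => (f v == 2) * (sier_adj u v : nat))); last by move=> u _; rewrite mulnb.
  rewrite -big_distrr /= mulnC; apply: leq_mul => //.
  rewrite (sum_ind (fun u => sier_adj u v)).
  apply: leq_trans (deg_le v); apply: subset_leq_card; apply/subsetP => u.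
  by rewrite inE.
- rewrite /rd_weight big_distrr -big_split /=; apply: eq_bigr => u _.
  by move: (f2 u); case: (f u) => [|[|[|]]].
Qed.
End S.

Unset Implicit Arguments.

Theorem theorem3p2 (n t : nat) (hn : 2 <= n) (ht : 1 <= t) :
  is_roman_domination_number (@sier_adj n t)
    (if odd t then 2 * ceil_div (n ^ t) (n + 1)
     else 2 * ceil_div (n ^ t) (n + 1) - 1).
Proof.
case: t ht => [//|t] _.
have x0 : 'I_n := Ordinal (ltnW hn).
have n1 : 1 <= n by exact: ltnW.
have [CCo CCe] := @cc_closed n t.+1 n1.
have [Me Mo] := main n t.+1.
split.
- case Ot: (odd t.+1).
  + have [K1 _] := CCo Ot.
    have [A1 [A2 _]] := Mo Ot.
    set k := (cc n t.+1).1 true in K1.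
    have -> : ceil_div (n ^ t.+1) (n + 1) = k.
      rewrite /ceil_div.
      have -> : n ^ t.+1 + (n + 1) - 1 = k * (n + 1) + (n - 1) by nia.
      by rewrite divnMDl ?addn1 // divn_small //; lia.
    exists (fun u : t.+1.-tuple 'I_n => if code true (Some x0) u then 2 else 0); split.
    * split => [u|u]; first by case: ifP.
      case: ifP => // cu _.
      have [v /andP [/orP [/eqP uv|uv] cv]] := A2 x0 u.
        by rewrite uv cv in cu.
      by exists v; rewrite uv cv.
    * rewrite /rd_weight.
      rewrite (eq_bigr (fun u : t.+1.-tuple 'I_n => 2 * (code true (Some x0) u : nat))); last first.
        by move=> u _; case: ifP.
      by rewrite -big_distrr /= count_code.
  + have [K1 _] := CCe (negbT Ot).
    have [_ [_ [B1 B2]]] := Me (negbT Ot).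
    set m := (cc n t.+1).1 false in K1.
    have -> : ceil_div (n ^ t.+1) (n + 1) = m.+1.
      rewrite /ceil_div.
      have -> : n ^ t.+1 + (n + 1) - 1 = m.+1 * (n + 1) + 0 by nia.
      by rewrite divnMDl ?addn1 // div0n addn0.
    exists (fun u : t.+1.-tuple 'I_n => if code false (Some x0) u then 2
             else if tval u == nseq t.+1 x0 then 1 else 0); split.
    * split => [u|u]; first by case: ifP => //; case: ifP.
      case: ifP => // cu; case: ifP => // nu _.
      have [v /andP [/orP [/eqP uv|uv] cv]] := B2 x0 u (negbT nu).
        by rewrite uv cv in cu.
      by exists v; rewrite uv cv.
    * rewrite /rd_weight.
      rewrite (eq_bigr (fun u : t.+1.-tuple 'I_n => 2 * (code false (Some x0) u : nat) +
                 (u == nseq_tuple t.+1 x0 : nat))); last first.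
        move=> u _; case: ifP => cu.
          case: eqP => // Eu; move: cu; rewrite Eu; change (code false (Some x0) (nseq t.+1 x0) -> 2 = 2 * true + true); by rewrite B1.
        by rewrite -(inj_eq val_inj) /=; case: ifP.
      rewrite big_split /= -big_distrr /= count_code /=.
      rewrite (sum_ind (pred1 (nseq_tuple t.+1 x0))) card1.
      rewrite -/m; lia.
- move=> f /lower [a [b [z [H1 H2 H3]]]]; rewrite H3.
  case Ot: (odd t.+1).
  + have [K1 _] := CCo Ot.
    set k := (cc n t.+1).1 true in K1.
    have -> : ceil_div (n ^ t.+1) (n + 1) = k.
      rewrite /ceil_div.
      have -> : n ^ t.+1 + (n + 1) - 1 = k * (n + 1) + (n - 1) by nia.
      by rewrite divnMDl ?addn1 // divn_small //; lia.
    nia.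
  + have [K1 _] := CCe (negbT Ot).
    set m := (cc n t.+1).1 false in K1.
    have -> : ceil_div (n ^ t.+1) (n + 1) = m.+1.
      rewrite /ceil_div.
      have -> : n ^ t.+1 + (n + 1) - 1 = m.+1 * (n + 1) + 0 by nia.
      by rewrite divnMDl ?addn1 // div0n addn0.
    nia.
Qed.
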